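(* Let $c\ge1$ be an integer and $\lambda,\mu,\alpha>0$ with $\lambda<c\mu$. Consider the $(c+1)\times(c+1)$ matrices (rows and columns indexed $0,\dots,c$) $Q_1=\lambda I$, $Q_{-1}=\mathrm{diag}(0,\mu,2\mu,\dots,c\mu)$, and $Q_0$ upper bidiagonal with diagonal entries $(Q_0)_{j,j}=-q_j$, $q_j=\lambda+(c-j)\alpha+j\mu$, superdiagonal entries $(Q_0)_{j,j+1}=(c-j)\alpha$ ($j=0,\dots,c-1$), and all other entries $0$. Let $R=(r_{i,j})$ be the minimal nonnegative solution of $Q_1+RQ_0+R^2Q_{-1}=O$. Then $R$ is upper triangular, its diagonal entries are $$r_{0,0}=\frac{\lambda}{\lambda+c\alpha},\quad r_{c,c}=\frac{\lambda}{c\mu},\quad r_{i,i}=\frac{\lambda+i\mu+(c-i)\alpha-\sqrt{(\lambda+i\mu+(c-i)\alpha)^2-4i\lambda\mu}}{2i\mu}\ (1\le i\le c-1),$$ and for $0\le i<j\le c$, $$r_{i,j}=\frac{(c-j+1)\alpha\, r_{i,j-1}+j\mu\sum_{k=i+1}^{j-1}r_{i,k}r_{k,j}}{\lambda+(c-j)\alpha+j\mu-j\mu(r_{i,i}+r_{j,j})}.$$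
   Context: $Q_{1},Q_0,Q_{-1}$ are the level-up, local and level-down blocks of the homogeneous part (levels $\ge c$, level = number of jobs, phase = number of busy servers) of the QBD generator of the M/M/$c$ queue with exponential setup times under the ON-OFF policy; $R$ is the rate matrix of that homogeneous part. *)

(* Defs.v *)
From HB Require Import structures.
From mathcomp Require Import all_boot all_order all_algebra.
Set Implicit Arguments. Unset Strict Implicit. Unset Printing Implicit Defensive.
Import Order.TTheory GRing.Theory Num.Theory.
Local Open Scope ring_scope.

(* Homogeneous QBD blocks of the M/M/c queue with exponential setup (ON-OFF),
   phases 0..c = number of busy servers. *)

Definition Qup (R : ringType) (c : nat) (lam : R) : 'M[R]_(c.+1) :=
  \matrix_(i, j) (if i == j then lam else 0).

Definition Qdown (R : ringType) (c : nat) (mu : R) : 'M[R]_(c.+1) :=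
  \matrix_(i, j) (if i == j then (i : nat)%:R * mu else 0).

Definition Qloc (R : ringType) (c : nat) (lam mu alpha : R) : 'M[R]_(c.+1) :=
  \matrix_(i, j)
    (if i == j then - (lam + (c - i)%:R * alpha + (i : nat)%:R * mu)
     else if (j : nat) == i.+1 then (c - i)%:R * alpha else 0).

Definition solves_QBD (R : ringType) (c : nat) (lam mu alpha : R)
    (X : 'M[R]_(c.+1)) : Prop :=
  Qup c lam + X *m Qloc c lam mu alpha + (X *m X) *m Qdown c mu = 0.

Definition nonneg_mx (R : numDomainType) (m n : nat) (X : 'M[R]_(m, n)) : Prop :=
  forall i j, 0 <= X i j.

Definition minimal_nonneg_solution (R : numDomainType) (c : nat)
    (lam mu alpha : R) (X : 'M[R]_(c.+1)) : Prop :=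
  [/\ solves_QBD lam mu alpha X, nonneg_mx X &
      forall Y : 'M[R]_(c.+1), solves_QBD lam mu alpha Y -> nonneg_mx Y ->
        forall i j, X i j <= Y i j].

(* Main.v *)
Require Import Defs.
From HB Require Import structures.
From mathcomp Require Import all_boot all_order all_algebra.
From mathcomp Require Import ring lra zify.
Import Order.TTheory GRing.Theory Num.Theory.
Local Open Scope ring_scope.



Lemma root_facts (R : rcfType) (a b l : R) : 0 < a -> 0 < l -> 0 <= b ->
  let q := l + a + b in let s := Num.sqrt (q ^+ 2 - 4%:R * a * l) in
  [/\ 0 <= s, s ^+ 2 = q ^+ 2 - 4%:R * a * l, 0 <= q - s, q - s <= 2%:R * l
    & (0 < b -> q - s < 2%:R * a)].
Proof.
move=> a0 l0 b0 q s.
have D0 : 0 <= q ^+ 2 - 4%:R * a * l.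
  have h1 := sqr_ge0 (l - a). have h2 : 0 <= b * (b + 2%:R * (l + a)) by apply: mulr_ge0 => //; lra.
  have -> : q ^+ 2 - 4%:R * a * l = (l - a) ^+ 2 + b * (b + 2%:R * (l + a)) by rewrite /q; ring.
  lra.
have s0 : 0 <= s by exact: sqrtr_ge0.
have s2 : s ^+ 2 = q ^+ 2 - 4%:R * a * l by rewrite sqr_sqrtr.
split => //.
- rewrite subr_ge0; rewrite leNgt; apply/negP => H. rewrite /q in H s2. nra.
- rewrite leNgt; apply/negP => H. rewrite /q in H s2. nra.
- move=> bp; rewrite ltNge; apply/negP => H. rewrite /q in H s2. nra.
Qed.

Section S.
Variables (R : rcfType) (c : nat) (lam mu alpha : R).

Definition qf (j : nat) : R := lam + j%:R * mu + (c - j)%:R * alpha.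
Definition dY (j : nat) : R :=
  if j == 0%N then lam / qf 0 else
  (qf j - Num.sqrt (qf j ^+ 2 - 4%:R * j%:R * lam * mu)) / (2%:R * j%:R * mu).

Fixpoint G (d : nat) (i j : nat) : R :=
  match d with
  | 0 => if i == j then dY j else 0
  | d'.+1 => if (i < j)%N && (j - i == d'.+1)%N then
      ((c - j + 1)%:R * alpha * G d' i j.-1
       + j%:R * mu * \sum_(k : 'I_c.+1 | (i < k < j)%N) G d' i k * G d' k j)
      / (qf j - j%:R * mu * (G d' i i + G d' j j))
    else G d' i j
  end.

Lemma G_lower d i j : (j < i)%N -> G d i j = 0.
Proof.
move=> ji; elim: d => [|d IH] /=; first by rewrite gtn_eqF.
by rewrite ltnNge (ltnW ji).
Qed.

Lemma G_diag d i : G d i i = dY i.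
Proof. by elim: d => [|d IH] /=; rewrite ?eqxx ?ltnn. Qed.

Lemma G_stab n d i j : (j - i <= d)%N -> G (n + d) i j = G d i j.
Proof.
move=> h; elim: n => [|n IH] //=.
have -> : (j - i == (n + d).+1)%N = false by apply/negbTE; lia.
by rewrite andbF.
Qed.

Lemma G_stab2 d e i j : (j - i <= d)%N -> (j - i <= e)%N -> G d i j = G e i j.
Proof.
move=> h1 h2.
by rewrite -(subnK h1) G_stab // -(subnK h2) G_stab.
Qed.

Definition Y : 'M[R]_c.+1 := \matrix_(i, j) G c i j.

Lemma Y_G d (i j : 'I_c.+1) : (j - i <= d)%N -> G d i j = Y i j.
Proof.
move=> h; rewrite mxE.
have hc : (j - i <= c)%N by have := ltn_ord j; lia.
exact: G_stab2.
Qed.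


Lemma Y_lower (i j : 'I_c.+1) : (j < i)%N -> Y i j = 0.
Proof. by move=> h; rewrite mxE G_lower. Qed.

Lemma Y_diag (i : 'I_c.+1) : Y i i = dY i.
Proof. by rewrite mxE G_diag. Qed.

Lemma Y_rec (i j : 'I_c.+1) : (i < j)%N ->
  Y i j = ((c - j + 1)%:R * alpha * Y i (inord j.-1)
       + j%:R * mu * \sum_(k : 'I_c.+1 | (i < k < j)%N) Y i k * Y k j)
      / (qf j - j%:R * mu * (Y i i + Y j j)).
Proof.
move=> ij; rewrite -(Y_G (j - i)%N) //.
have [d hd] : exists d, (j - i = d.+1)%N by exists (j - i).-1; lia.
rewrite hd /= ij hd eqxx /=.
have jc := ltn_ord j.
have -> : G d i j.-1 = Y i (inord j.-1).
  by rewrite -(Y_G d) inordK //; lia.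
rewrite !(Y_G d) //; try lia.
congr (_ / _); congr (_ + _ * _).
by apply: eq_bigr => k /andP[ik kj]; rewrite !(Y_G d) //; lia.
Qed.


Lemma QdownE (k j : 'I_c.+1) : Qdown c mu k j = if k == j then (k : nat)%:R * mu else 0.
Proof. by rewrite mxE. Qed.
Lemma QlocE (k j : 'I_c.+1) : Qloc c lam mu alpha k j =
  if k == j then - (lam + (c - k)%:R * alpha + (k : nat)%:R * mu)
  else if (j : nat) == k.+1 then (c - k)%:R * alpha else 0.
Proof. by rewrite mxE. Qed.

Lemma entryE (X : 'M[R]_c.+1) (i j : 'I_c.+1) :
  (Qup c lam + X *m Qloc c lam mu alpha + (X *m X) *m Qdown c mu) i j =
  (if i == j then lam else 0) - X i j * qf j
  + (if (0 < j)%N then (c - j + 1)%:R * alpha * X i (inord j.-1) else 0)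
  + j%:R * mu * \sum_k X i k * X k j.
Proof.
rewrite !mxE.
have Hd : \sum_k (X *m X) i k * Qdown c mu k j = (X *m X) i j * (j%:R * mu).
  rewrite (bigD1 j) //= big1 ?addr0 => [|k /negbTE kj]; rewrite QdownE ?eqxx //.
  by rewrite kj mulr0.
have jc := ltn_ord j.
have Hl : \sum_k X i k * Qloc c lam mu alpha k j = - (X i j * qf j)
   + (if (0 < j)%N then (c - j + 1)%:R * alpha * X i (inord j.-1) else 0).
  rewrite (bigD1 j) //= QlocE eqxx mulrN /qf addrAC; congr (_ + _).
  case: (posnP j) => [j0|jp].
    apply: big1 => k /negbTE kj; rewrite QlocE kj j0 /= mulr0 //.
  rewrite (bigD1 (inord j.-1)) /=; last first.
    apply/negP => /eqP/(congr1 val) /=; rewrite inordK; lia.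
  rewrite big1 ?addr0 => [|k /andP[kj kj']].
    rewrite QlocE inordK; last lia.
    have -> : (inord j.-1 == j :> 'I_c.+1) = false.
      apply/negP => /eqP/(congr1 val) /=; rewrite inordK; lia.
    have -> : (nat_of_ord j == j.-1.+1) = true by apply/eqP; lia.
    have -> : (c - j.-1 = c - j + 1)%N by lia.
    by rewrite mulrC.
  rewrite QlocE (negbTE kj).
  case: eqP => [jk|]; last by rewrite mulr0.
  have kE : k = inord j.-1 by apply/val_inj; rewrite /= inordK; lia.
  by rewrite kE eqxx in kj'.
by rewrite Hd Hl mxE addrA; congr (_ + _); exact: mulrC.
Qed.

Definition upper (X : 'M[R]_c.+1) := forall a b : 'I_c.+1, (b < a)%N -> X a b = 0.

Lemma sum_upper (X : 'M[R]_c.+1) (i j : 'I_c.+1) : upper X ->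
  \sum_k X i k * X k j =
  if (i < j)%N then X i i * X i j + X i j * X j j
       + \sum_(k : 'I_c.+1 | (i < k < j)%N) X i k * X k j
  else if i == j then X i i ^+ 2 else 0.
Proof.
move=> up.
have zero (k : 'I_c.+1) : ~~ (i <= k <= j)%N -> X i k * X k j = 0.
  rewrite negb_and -!ltnNge => /orP[h|h].
    by rewrite up // mul0r.
  by rewrite (up k j) // mulr0.
case: (ltngtP i j) => [ij|ji|ij].
- rewrite (bigID (fun k : 'I_c.+1 => (i < k < j)%N)) /= addrC; congr (_ + _).
  rewrite (bigD1 i) /=; last by rewrite ltnn.
  rewrite (bigD1 j) /=; last first.
    by rewrite ltnn andbF /=; apply/eqP => /(congr1 val) /=; lia.
  rewrite big1 ?addr0 // => k /andP[/andP[nb ki] kj]; apply: zero.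
  move: ki kj nb; rewrite -!(inj_eq val_inj) /=; lia.
- have -> : (i == j) = false by apply/eqP => /(congr1 val) /=; lia.
  by apply: big1 => k _; apply: zero; lia.
- have ije : i = j by apply: val_inj.
  subst j; rewrite eqxx (bigD1 i) //= big1 ?addr0 ?expr2 //.
  move=> k ki; apply: zero; move: ki; rewrite -!(inj_eq val_inj) /=; lia.
Qed.

Hypotheses (c1 : (1 <= c)%N) (lam0 : 0 < lam) (mu0 : 0 < mu) (al0 : 0 < alpha)
  (lcm : lam < c%:R * mu).
Local Ltac gh := have hl := lam0; have hm := mu0; have ha := al0; have hc := lcm; have hc1 := c1.

Lemma qf0 : qf 0 = lam + c%:R * alpha.
Proof. by rewrite /qf mul0r addr0 subn0. Qed.

Lemma dY0_facts : 0 <= dY 0 /\ dY 0 < 1.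
Proof.
gh.
rewrite /dY eqxx qf0.
have ca : 0 < c%:R * alpha by apply: mulr_gt0 => //; rewrite ltr0n.
split; first by apply: divr_ge0; lra.
by rewrite ltr_pdivrMr; lra.
Qed.

Lemma dY_facts j : (1 <= j)%N -> let a := j%:R * mu in
  [/\ 0 <= dY j, a * dY j <= lam, ((j < c)%N -> dY j < 1),
      a * dY j ^+ 2 - qf j * dY j + lam = 0 &
      forall x, 0 <= x -> x <= dY j -> a * x ^+ 2 - qf j * x + lam = 0 -> x = dY j].
Proof.
gh.
move=> j1 a.
have a0 : 0 < a by apply: mulr_gt0 => //; rewrite ltr0n.
have b0 : 0 <= (c - j)%:R * alpha by apply: mulr_ge0 => //; lra.
have [s0 s2 qs1 qs2 qs3] := @root_facts R a _ lam a0 hl b0.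
set s := Num.sqrt _ in s0 s2 qs1 qs2 qs3.
have qE : qf j = lam + a + (c - j)%:R * alpha by [].
have dE : dY j = (qf j - s) / (2%:R * a).
  rewrite /dY; case: eqP => [j0|_]; first by move: j1; rewrite j0.
  rewrite /s qE; congr ((_ - Num.sqrt (_ - _)) / _); rewrite /a; ring.
rewrite -qE in s0 s2 qs1 qs2 qs3.
set y := dY j in dE *.
have hy : 2%:R * a * y = qf j - s by rewrite dE; field; lra.
have quad : a * y ^+ 2 - qf j * y + lam = 0.
  apply: (@mulfI _ (4%:R * a)); first by apply/negP => /eqP; lra.
  have -> : 4%:R * a * (a * y ^+ 2 - qf j * y + lam) =
     (2%:R * a * y) ^+ 2 - 2%:R * qf j * (2%:R * a * y) + 4%:R * a * lam by ring.
  rewrite hy mulr0.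
  have -> : (qf j - s) ^+ 2 - 2%:R * qf j * (qf j - s) + 4%:R * a * lam =
            s ^+ 2 - (qf j ^+ 2 - 4%:R * a * lam) by ring.
  by rewrite s2 subrr.
split => //.
- by rewrite dE; apply: divr_ge0 => //; lra.
- lra.
- move=> jc; have bp : 0 < (c - j)%:R * alpha.
    by apply: mulr_gt0 => //; rewrite ltr0n subn_gt0.
  have := qs3 bp; rewrite dE ltr_pdivrMr; last lra.
  by rewrite mul1r.
- move=> x x0 xy qx.
  have : (x - y) * (a * (x + y) - qf j) = 0.
    have -> : (x - y) * (a * (x + y) - qf j) =
      (a * x ^+ 2 - qf j * x + lam) - (a * y ^+ 2 - qf j * y + lam) by ring.
    by rewrite qx quad subrr.
  move/eqP; rewrite mulf_eq0 => /orP[/eqP h|/eqP h]; first lra.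
  have h2 : 2%:R * a * x = qf j + s by lra.
  have : a * x <= a * y by rewrite ler_pM2l.
  move=> axy; have : a * x = a * y by lra.
  by apply: mulfI; rewrite gt_eqF.
Qed.

Lemma dYc : dY c = lam / (c%:R * mu).
Proof.
gh.
rewrite /dY; case: eqP => [c0|_]; first by move: c1; rewrite c0.
rewrite /qf subnn mul0r addr0.
have -> : (lam + c%:R * mu) ^+ 2 - 4%:R * c%:R * lam * mu = (c%:R * mu - lam) ^+ 2 by ring.
rewrite sqrtr_sqr ger0_norm; last lra.
have cm : 0 < c%:R * mu by lra.
field; apply/andP; split; apply/negP => /eqP; try lra.
by move/eqP; rewrite pnatr_eq0 => /eqP c0; move: hc1; rewrite c0.
Qed.

Lemma dY_ge0 j : 0 <= dY j.
Proof.
gh.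
case: j => [|j]; first by case: dY0_facts.
by case: (@dY_facts j.+1 isT).
Qed.

Lemma dY_lt1 j : (j <= c)%N -> dY j < 1.
Proof.
gh.
case: j => [|j] jc; first by case: dY0_facts.
case: (ltnP j.+1 c) => h.
  by case: (@dY_facts j.+1 isT) => _ _ /(_ h).
have -> : j.+1 = c by apply/eqP; rewrite eqn_leq jc h.
rewrite dYc ?ltr_pdivrMr ?mul1r //; lra.
Qed.

Lemma denom_pos i j : (i < j)%N -> (j <= c)%N ->
  0 < qf j - j%:R * mu * (dY i + dY j).
Proof.
gh.
move=> ij jc.
have j1 : (1 <= j)%N by apply: leq_ltn_trans ij.
have [_ h2 _ _ _] := @dY_facts j j1.
have a0 : 0 < j%:R * mu by apply: mulr_gt0 => //; rewrite ltr0n.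
have d1 : dY i < 1 by apply: dY_lt1; apply: ltnW; apply: leq_trans jc.
have : j%:R * mu * dY i < j%:R * mu by rewrite -[X in _ < X]mulr1 ltr_pM2l.
have b0 : 0 <= (c - j)%:R * alpha by apply: mulr_ge0 => //; lra.
rewrite /qf; lra.
Qed.

Lemma G_ge0 d i j : (j <= c)%N -> 0 <= G d i j.
Proof.
gh.
elim: d i j => [|d IH] i j jc /=; first by case: eqP => // _; exact: dY_ge0.
case: ifP => [/andP[ij _]|_]; last exact: IH.
apply: divr_ge0.
  apply: addr_ge0; apply: mulr_ge0.
  - by apply: mulr_ge0 => //; lra.
  - by apply: IH; apply: leq_trans (leq_pred _) jc.
  - by apply: mulr_ge0 => //; lra.
  - apply: sumr_ge0 => k _; apply: mulr_ge0; apply: IH => //.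
    by rewrite -ltnS.
rewrite !G_diag; apply: ltW; exact: denom_pos.
Qed.

Lemma Y_upper : upper Y.
Proof. by move=> a b ba; apply: Y_lower. Qed.

Lemma Y_nonneg : nonneg_mx Y.
Proof. by move=> i j; rewrite mxE; apply: G_ge0; rewrite -ltnS. Qed.

Lemma Y_solves : solves_QBD lam mu alpha Y.
Proof.
gh.
rewrite /solves_QBD; apply/matrixP => i j.
rewrite entryE sum_upper; last exact: Y_upper.
rewrite [RHS]mxE.
have jc := ltn_ord j.
case: (ltngtP i j) => [ij|ji|ij].
- have -> : (i == j) = false by apply/eqP => /(congr1 val) /=; lia.
  have j0 : (0 < j)%N by lia.
  rewrite j0.
  have Dp := @denom_pos i j ij (ltnSE jc).
  rewrite -!Y_diag in Dp.
  set D := qf j - _ in Dp.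
  have hY : Y i j * D = (c - j + 1)%:R * alpha * Y i (inord j.-1)
       + j%:R * mu * \sum_(k : 'I_c.+1 | (i < k < j)%N) Y i k * Y k j.
    by rewrite {1}Y_rec // mulfVK // gt_eqF.
  move: hY; rewrite /D.
  set A := (c - j + 1)%:R * alpha * Y i (inord j.-1).
  set S := \sum_(k : 'I_c.+1 | (i < k < j)%N) Y i k * Y k j.
  move=> hY.
  have E : 0 - Y i j * qf j + A + j%:R * mu * (Y i i * Y i j + Y i j * Y j j + S)
     = A + j%:R * mu * S - Y i j * (qf j - j%:R * mu * (Y i i + Y j j)) by ring.
  by rewrite E hY subrr.
- have -> : (i == j) = false by apply/eqP => /(congr1 val) /=; lia.
  rewrite Y_lower // mulr0 mul0r subr0 add0r addr0.
  case: ifP => // j0; rewrite Y_lower ?mulr0 ?addr0 //.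
  rewrite inordK; lia.
- have ije : i = j by apply: val_inj.
  subst j; rewrite eqxx Y_diag.
  have -> : (if (0 < i)%N then (c - i + 1)%:R * alpha * Y i (inord i.-1) else 0) = 0.
    case: ifP => // i0; rewrite Y_lower ?mulr0 //.
    rewrite inordK; lia.
  rewrite addr0.
  case: (posnP i) => [i0|i0].
    rewrite i0 mul0r mul0r addr0 /dY eqxx divfK ?subrr //.
    rewrite qf0; apply: lt0r_neq0.
    have : 0 < c%:R * alpha by apply: mulr_gt0 => //; rewrite ltr0n.
    lra.
  have [_ _ _ q _] := @dY_facts i i0.
  rewrite -q; ring.
Qed.

End S.

Theorem mainTheorem4 (R : rcfType) (c : nat) (lam mu alpha : R)
    (Rm : 'M[R]_(c.+1)) :
  (1 <= c)%N -> 0 < lam -> 0 < mu -> 0 < alpha -> lam < c%:R * mu ->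
  minimal_nonneg_solution lam mu alpha Rm ->
  [/\ (forall i j : 'I_c.+1, (j < i)%N -> Rm i j = 0),
      Rm ord0 ord0 = lam / (lam + c%:R * alpha),
      Rm ord_max ord_max = lam / (c%:R * mu),
      (forall i : 'I_c.+1, (1 <= i)%N -> (i <= c - 1)%N ->
         Rm i i =
           (lam + (i : nat)%:R * mu + (c - i)%:R * alpha
            - Num.sqrt ((lam + (i : nat)%:R * mu + (c - i)%:R * alpha) ^+ 2
                        - 4%:R * (i : nat)%:R * lam * mu))
           / (2%:R * (i : nat)%:R * mu)) &
      (forall i j : 'I_c.+1, (i < j)%N ->
         Rm i j =
           ((c - j + 1)%:R * alpha * Rm i (inord (j.-1))
            + (j : nat)%:R * mu *
                \sum_(k : 'I_c.+1 | (i < k < j)%N) Rm i k * Rm k j)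
           / (lam + (c - j)%:R * alpha + (j : nat)%:R * mu
              - (j : nat)%:R * mu * (Rm i i + Rm j j)))].
Proof.
move=> c1 lam0 mu0 al0 lcm [sol nn mn].
have le := mn _ (@Y_solves R c lam mu alpha c1 lam0 mu0 al0 lcm) (@Y_nonneg R c lam mu alpha c1 lam0 mu0 al0 lcm).
have up : @upper R c Rm.
  move=> a b ba; apply/le_anti; rewrite nn andbT.
  by have := le a b; rewrite Y_lower.
have entry i j := congr1 (fun M : 'M[R]_c.+1 => M i j) sol.
have diag : forall j : 'I_c.+1, Rm j j = dY R c lam mu alpha j.
  move=> j; have := entry j j; rewrite /= entryE sum_upper // ltnn eqxx mxE.
  have -> : (if (0 < j)%N then (c - j + 1)%:R * alpha * Rm j (inord j.-1) else 0) = 0.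
    case: ifP => // /idP j0; rewrite up ?mulr0 //.
    have jc := ltn_ord j; rewrite inordK; lia.
  rewrite addr0.
  have := le j j; rewrite Y_diag => ley.
  case: (posnP j) => [j0|j0].
    rewrite j0 mul0r mul0r addr0 /dY eqxx => h.
    rewrite (@qf0 R c lam mu alpha) in h *.
    have cp : 0 < lam + c%:R * alpha.
      have : 0 < c%:R * alpha by apply: mulr_gt0 => //; rewrite ltr0n.
      lra.
    have e : Rm j j * (lam + c%:R * alpha) = lam by lra.
    by rewrite -{1}e mulfK // gt_eqF.
  have [_ _ _ _ uq] := @dY_facts R c lam mu alpha c1 lam0 mu0 al0 lcm j j0.
  move=> h; apply: uq => //; lra.
split => //.
- by rewrite diag /dY eqxx qf0.
- by rewrite diag /= (@dYc R c lam mu alpha c1 lam0 mu0 al0 lcm).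
- move=> i i1 _; rewrite diag /dY.
  by case: eqP => [i0|_] //; move: i1; rewrite i0.
- move=> i j ij.
  have jc := ltn_ord j.
  have := entry i j; rewrite /= entryE sum_upper // ij mxE.
  have -> : (i == j) = false by apply/eqP => /(congr1 val) /=; lia.
  have j0 : (0 < j)%N by lia.
  rewrite j0.
  have Dp := @denom_pos R c lam mu alpha c1 lam0 mu0 al0 lcm i j ij (ltnSE jc).
  rewrite -!diag in Dp.
  have -> : lam + (c - j)%:R * alpha + j%:R * mu = qf R c lam mu alpha j.
    by rewrite /qf addrAC.
  set D := qf _ _ _ _ _ j - _ in Dp *.
  set A := (c - j + 1)%:R * alpha * Rm i (inord j.-1).
  set S := \sum_(k : 'I_c.+1 | (i < k < j)%N) Rm i k * Rm k j.
  move=> E.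
  have hY : Rm i j * D = A + j%:R * mu * S.
    rewrite /D; move: E; rewrite /qf => E; lra.
  by rewrite -hY mulfK // gt_eqF.
Qed.
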